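(* Let $V$ be a finite-dimensional complex vector space with a Hermitian inner product and norm $\|\cdot\|$, let $\mathbf G$ be a finite group of unitary transformations of $V$, and let $\mathbf x_0\in V$ with $\|\mathbf x_0\|=1$ have full orbit under $\mathbf G$. Fix a subgroup sequence $\{I\}=\mathbf G_0<\mathbf G_1<\cdots<\mathbf G_m=\mathbf G$ and coset leader sets $\operatorname{CL}(\mathbf G_k/\mathbf G_{k-1})$, $1\le k\le m$. Then the subgroup decoding algorithm decodes correctly with some noise if and only if, for every $k$ with $0\le k<m$, every induced coset leader in $\operatorname{CL}(\mathbf G/\mathbf G_k)$ is minimal (as a coset representative of $\mathbf G_k$ in $\mathbf G$).
   Context: $\mathbf x_0$ has full orbit if $|\mathbf G\mathbf x_0|=|\mathbf G|$; $S=\operatorname{Stab}_{\mathbf G}(\mathbf x_0)$, and for a subgroup $H$, $\operatorname{Stab}_H(\mathbf x_0)=H\cap S$. Codewords are the vectors $g^{-1}\mathbf x_0$, $g\in\mathbf G$. A set $\operatorname{CL}(\mathbf G_k/\mathbf G_{k-1})$ of coset leaders is a set of representatives of the left cosets $a\mathbf G_{k-1}$ of $\mathbf G_{k-1}$ in $\mathbf G_k$ containing $I$. For $k<l$ the induced coset leaders are $\operatorname{CL}(\mathbf G_l/\mathbf G_k)=\{c_l c_{l-1}\cdots c_{k+1}: c_i\in\operatorname{CL}(\mathbf G_i/\mathbf G_{i-1})\}$, a complete set of left coset representatives of $\mathbf G_k$ in $\mathbf G_l$. Subgroup decoding algorithm: given $\mathbf r\in V$, set $\mathbf r_0=\mathbf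 r$; for $k=1,\dots,m$ choose $d_k\in\operatorname{CL}(\mathbf G_k/\mathbf G_{k-1})$ minimizing $\|a\mathbf r_{k-1}-\mathbf x_0\|$ over $a\in\operatorname{CL}(\mathbf G_k/\mathbf G_{k-1})$ (ties broken by a fixed ordering) and set $\mathbf r_k=d_k\mathbf r_{k-1}$; output $g'=d_m\cdots d_1$. It decodes correctly with some noise if there is $\delta>0$ such that for all $g\in\mathbf G$ and $\mathbf r\in V$ with $\|\mathbf r-g^{-1}\mathbf x_0\|<\delta$ the output lies in $Sg$. Fundamental region of a subgroup $H$: $\operatorname{FR}(H)=\{\mathbf x\in V:\|\mathbf x-\mathbf x_0\|<\|h\mathbf x-\mathbf x_0\|\text{ for all }h\in H\setminus\operatorname{Stab}_H(\mathbf x_0)\}$. For subgroups $H\le K$, a coset representative $c$ of $H$ in $K$ is minimal if $\mathbf x_0\in c(\operatorname{FR}(H))$. *)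

(* Defs.v *)
From HB Require Import structures.
From mathcomp Require Import all_boot all_order all_algebra all_fingroup.
From mathcomp Require Import reals.
From mathcomp.real_closed Require Import complex.
Set Implicit Arguments. Unset Strict Implicit. Unset Printing Implicit Defensive.
Import Order.TTheory GRing.Theory Num.Theory.
Local Open Scope ring_scope.

(* V = C^n (column vectors over C = R[i], R the real numbers) with the
   standard Hermitian inner product; G is given as the image of a faithful
   unitary representation rho of a finite group G (acting by v |-> rho g *m v). *)

Section SubgroupDecoding.
Variables (R : realType) (n : nat) (gT : finGroupType).
Variables (rho : gT -> 'M[R[i]]_n) (x0 : 'cV[R[i]]_n).

Definition hnorm (v : 'cV[R[i]]_n) : R :=
  Num.sqrt (\sum_i (complex.Re (v i 0) ^+ 2 + complex.Im (v i 0) ^+ 2)).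

Definition adjmx (A : 'M[R[i]]_n) : 'M[R[i]]_n := (map_mx Num.conj A)^T.

Definition unitary_mx (A : 'M[R[i]]_n) : Prop := adjmx A *m A = 1%:M.

Definition argmin_first (f : gT -> R) (s : seq gT) : gT :=
  foldl (fun b a => if f a < f b then a else b) (head 1%g s) s.

(* s is a set of coset leaders of H in K (left cosets a H), containing 1,
   listed in a fixed order (the order used to break ties) *)
Definition coset_leaders (K H : {set gT}) (s : seq gT) : Prop :=
  [/\ uniq s, (1%g \in s), {subset s <= K} &
      forall a, a \in K -> exists! c, c \in s /\ c \in (a *: H)%g].

Variable CL : nat -> seq gT.

(* after k steps: (d_k ... d_1, r_k) *)
Fixpoint dec_rec (k : nat) (r : 'cV[R[i]]_n) : gT * 'cV[R[i]]_n :=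
  match k with
  | 0 => (1%g, r)
  | k'.+1 =>
      let p := dec_rec k' r in
      let d := argmin_first (fun a => hnorm (rho a *m p.2 - x0)) (CL k) in
      ((d * p.1)%g, rho d *m p.2)
  end.

Definition subgroup_decode (m : nat) (r : 'cV[R[i]]_n) : gT := (dec_rec m r).1.

Definition stab (H : {set gT}) : {set gT} := [set h in H | rho h *m x0 == x0].

Definition in_FR (H : {set gT}) (x : 'cV[R[i]]_n) : Prop :=
  forall h, h \in (H :\: stab H) -> hnorm (x - x0) < hnorm (rho h *m x - x0).

Definition minimal_rep (H : {set gT}) (c : gT) : Prop :=
  exists y, in_FR H y /\ x0 = rho c *m y.

Definition decodes_correctly_with_noise (G : {set gT}) (m : nat) : Prop :=
  exists delta : R, 0 < delta /\
    forall (g : gT) (r : 'cV[R[i]]_n), g \in G ->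
      hnorm (r - rho g^-1%g *m x0) < delta ->
      subgroup_decode m r \in (stab G :* g)%g.

(* induced coset leaders CL(G_{k+j}/G_k) = { c_{k+j} ... c_{k+1} } *)
Fixpoint ind_CL (k j : nat) : seq gT :=
  match j with
  | 0 => [:: 1%g]
  | j'.+1 => [seq (c * d)%g | c <- CL (k + j), d <- ind_CL k j']
  end.

End SubgroupDecoding.

(* Main.v *)
Require Import Defs.
From HB Require Import structures.
From mathcomp Require Import all_boot all_order all_algebra all_fingroup.
From mathcomp Require Import reals.
From mathcomp.real_closed Require Import complex.
From mathcomp Require Import ring lra zify.
Set Implicit Arguments. Unset Strict Implicit. Unset Printing Implicit Defensive.
Import Order.TTheory GRing.Theory Num.Theory.
Local Open Scope ring_scope.

Section Norms.
Variables (R : realType) (n : nat).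
Implicit Types v w p q : 'cV[R[i]]_n.

Definition Nm v : R := \sum_i (complex.Re (v i 0) ^+ 2 + complex.Im (v i 0) ^+ 2).

Lemma hnormE v : hnorm v = Num.sqrt (Nm v). Proof. by []. Qed.

Lemma Nm_ge0 v : 0 <= Nm v.
Proof. by apply: sumr_ge0 => i _; rewrite addr_ge0 ?sqr_ge0. Qed.

Lemma Nm_eq0 v : Nm v = 0 -> v = 0.
Proof.
move=> /eqP; rewrite psumr_eq0 => [H|i _]; last by rewrite addr_ge0 ?sqr_ge0.
apply/matrixP => i j; rewrite ord1 mxE.
have /eqP := allP H i (mem_index_enum _).
case: (v i 0) => a b /= E.
have ha : a ^+ 2 = 0 by apply/eqP; rewrite eq_le sqr_ge0 andbT; nra.
have hb : b ^+ 2 = 0 by apply/eqP; rewrite eq_le sqr_ge0 andbT; nra.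
move: ha hb => /eqP; rewrite sqrf_eq0 => /eqP -> /eqP; rewrite sqrf_eq0 => /eqP ->.
by [].
Qed.

Lemma ReD (x y : R[i]) : complex.Re (x + y) = complex.Re x + complex.Re y.
Proof. by case: x; case: y. Qed.
Lemma ImD (x y : R[i]) : complex.Im (x + y) = complex.Im x + complex.Im y.
Proof. by case: x; case: y. Qed.
Lemma ReN (x : R[i]) : complex.Re (- x) = - complex.Re x.
Proof. by case: x. Qed.
Lemma ImN (x : R[i]) : complex.Im (- x) = - complex.Im x.
Proof. by case: x. Qed.
Lemma ReM (t : R) (x : R[i]) : complex.Re (t%:C%C * x) = t * complex.Re x.
Proof. by case: x => a b /=; ring. Qed.
Lemma ImM (t : R) (x : R[i]) : complex.Im (t%:C%C * x) = t * complex.Im x.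
Proof. by case: x => a b /=; ring. Qed.

Lemma conj_mul (z : R[i]) : Num.conj z * z = ((complex.Re z)^+2 + (complex.Im z)^+2)%:C%C.
Proof. case: z => a b. rewrite /=. apply/eqP; rewrite eq_complex /=; apply/andP; split; apply/eqP; ring. Qed.

Lemma pt_le (l a b : R) : 0 < l -> 2 * a * b <= l * a ^+ 2 + l^-1 * b ^+ 2.
Proof.
move=> l0.
have hl : l * l^-1 = 1 by rewrite mulfV // gt_eqF.
have hi : 0 < l^-1 by rewrite invr_gt0.
have : 0 <= l^-1 * (l * a - b) ^+ 2 by rewrite mulr_ge0 ?sqr_ge0 // ltW.
have -> : l^-1 * (l * a - b) ^+ 2 = (l * l^-1) * (l * a ^+ 2) - 2 * (l * l^-1) * a * b + l^-1 * b ^+ 2 by ring.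
rewrite hl; lra.
Qed.

Lemma NmD_le v w (l : R) : 0 < l ->
  Nm (v + w) <= (1 + l) * Nm v + (1 + l^-1) * Nm w.
Proof.
move=> l0; rewrite /Nm !mulr_sumr -big_split /=; apply: ler_sum => i _.
rewrite mxE ReD ImD.
have h1 := pt_le (complex.Re (v i 0)) (complex.Re (w i 0)) l0.
have h2 := pt_le (complex.Im (v i 0)) (complex.Im (w i 0)) l0.
nra.
Qed.

Lemma NmD_ge v w (l : R) : 0 < l ->
  (1 - l) * Nm v + (1 - l^-1) * Nm w <= Nm (v + w).
Proof.
move=> l0; rewrite /Nm !mulr_sumr -big_split /=; apply: ler_sum => i _.
rewrite mxE ReD ImD.
have h1 := pt_le (complex.Re (v i 0)) (- complex.Re (w i 0)) l0.
have h2 := pt_le (complex.Im (v i 0)) (- complex.Im (w i 0)) l0.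
nra.
Qed.

Lemma Nm_sub_le v w : Nm (v - w) <= 2 * Nm v + 2 * Nm w.
Proof.
rewrite /Nm !mulr_sumr -big_split /=; apply: ler_sum => i _.
rewrite !mxE ReD ImD ReN ImN.
have h1 := pt_le (complex.Re (v i 0)) (complex.Re (w i 0)) ltr01.
have h2 := pt_le (complex.Im (v i 0)) (complex.Im (w i 0)) ltr01.
rewrite invr1 in h1 h2.
set a := complex.Re _ in h1 *; set b := complex.Re _ in h1 *.
set c := complex.Im _ in h2 *; set d := complex.Im _ in h2 *.
have -> : (a - b) ^+ 2 = a ^+ 2 + b ^+ 2 - 2 * a * b by ring.
have -> : (c - d) ^+ 2 = c ^+ 2 + d ^+ 2 - 2 * c * d by ring.
have ha := sqr_ge0 a; have hb := sqr_ge0 b; have hc := sqr_ge0 c; have hd := sqr_ge0 d.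
have e1 : 0 <= a ^+ 2 + b ^+ 2 + 2 * a * b.
  by rewrite (_ : _ + _ = (a + b) ^+ 2) ?sqr_ge0 //; ring.
have e2 : 0 <= c ^+ 2 + d ^+ 2 + 2 * c * d.
  by rewrite (_ : _ + _ = (c + d) ^+ 2) ?sqr_ge0 //; ring.
lra.
Qed.

Lemma Nm_pert v p q (t : R) :
  let w := v + t%:C%C *: (p - q) in
  Nm (w - q) = Nm (w - p) + Nm (v - q) - Nm (v - p) + 2 * t * Nm (p - q).
Proof.
rewrite /Nm mulr_sumr -big_split -sumrB -big_split /=; apply: eq_bigr => i _.
rewrite !mxE !(ReD, ImD, ReN, ImN, ReM, ImM); ring.
Qed.

Lemma Nm_conj v : (Nm v)%:C%C = ((map_mx Num.conj v)^T *m v) 0 0.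
Proof.
rewrite /Nm rmorph_sum mxE; apply: eq_bigr => i _.
by rewrite !mxE conj_mul.
Qed.

Lemma Nm_unitary (U : 'M[R[i]]_n) v : unitary_mx U -> Nm (U *m v) = Nm v.
Proof.
move=> hU; apply: complexI; rewrite !Nm_conj map_mxM trmx_mul.
by rewrite -mulmxA (mulmxA _ U) -/(adjmx U) hU mul1mx.
Qed.

Lemma Nm_opp v : Nm (- v) = Nm v.
Proof. by apply: eq_bigr => i _; rewrite mxE ReN ImN !sqrrN. Qed.

End Norms.

Lemma Nm_scale (R : realType) (n : nat) (t : R) (u : 'cV[R[i]]_n) :
  Nm (t%:C%C *: u) = t ^+ 2 * Nm u.
Proof.
rewrite /Nm mulr_sumr; apply: eq_bigr => i _; rewrite !mxE ReM ImM; ring.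
Qed.

Lemma Nm_x0 (R : realType) (n : nat) (v : 'cV[R[i]]_n) : hnorm v = 1 -> Nm v = 1.
Proof.
move=> h; have := sqr_sqrtr (Nm_ge0 v); rewrite -hnormE h expr1n => <-; done.
Qed.

Lemma hnorm_lt (R : realType) (n : nat) (v w : 'cV[R[i]]_n) :
  (hnorm v < hnorm w) = (Nm v < Nm w).
Proof.
rewrite !hnormE; case: (ltrgt0P (Nm w)) => [hw| hw| ->].
- by rewrite ltr_sqrt.
- by have := Nm_ge0 w; rewrite leNgt hw.
- by rewrite sqrtr0 !ltNge sqrtr_ge0 Nm_ge0.
Qed.

Lemma hnorm_le (R : realType) (n : nat) (v w : 'cV[R[i]]_n) :
  (hnorm v <= hnorm w) = (Nm v <= Nm w).
Proof. by rewrite !hnormE ler_sqrt // Nm_ge0. Qed.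

Section Generic.
Variables (R : realType) (T : finGroupType).

Lemma foldl_mem (f : T -> R) b0 s :
  foldl (fun b a => if f a < f b then a else b) b0 s \in b0 :: s.
Proof.
elim: s b0 => [|x s IH] b0 /=; first by rewrite mem_seq1.
case: ifP => _.
  by rewrite in_cons (IH x) orbT.
have := IH b0; rewrite !in_cons => /orP[->|->]; rewrite ?orbT //.
Qed.

Lemma foldl_le (f : T -> R) b0 s :
  let r := foldl (fun b a => if f a < f b then a else b) b0 s in
  f r <= f b0 /\ forall a, a \in s -> f r <= f a.
Proof.
elim: s b0 => [|x s IH] b0 /=; first by split.
case: ifP => hx.
  have [h1 h2] := IH x; split; first by apply: le_trans h1 (ltW hx).
  by move=> a; rewrite in_cons => /orP[/eqP->|/h2].
have [h1 h2] := IH b0; split => // a; rewrite in_cons => /orP[/eqP->|/h2 //].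
by apply: le_trans h1 _; rewrite leNgt hx.
Qed.

Lemma argmin_mem (f : T -> R) s : (1%g \in s) -> argmin_first f s \in s.
Proof.
case: s => [//|x s] hs; have := foldl_mem f (head 1%g (x :: s)) (x :: s).
by rewrite /argmin_first /= in_cons => /orP[/eqP->|]; rewrite ?mem_head.
Qed.

Lemma argmin_le (f : T -> R) s a : a \in s -> f (argmin_first f s) <= f a.
Proof. by move=> ha; have [_ /(_ a ha)] := foldl_le f (head 1%g s) s. Qed.

Lemma argmin_strict (f : T -> R) s a : (1%g \in s) -> a \in s ->
  (forall b, b \in s -> b != a -> f a < f b) -> argmin_first f s = a.
Proof.
move=> h1 ha hs; apply/eqP; apply/negPn/negP => hne.
have := hs _ (argmin_mem f h1) hne; rewrite ltNge => /negP; apply.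
exact: argmin_le.
Qed.

End Generic.

Lemma uniq_map_inj (T1 T2 : eqType) (f : T1 -> T2) (s : seq T1) :
  uniq (map f s) -> {in s &, injective f}.
Proof.
elim: s => [//|z s IH] /= /andP[hz hu] x y.
rewrite !in_cons => /orP[/eqP->|hx] /orP[/eqP->|hy] // E.
- by move: hz; rewrite E map_f.
- by move: hz; rewrite -E map_f.
- exact: IH.
Qed.

Lemma fin_gap (R : realType) (T : finType) (P : pred T) (f : T -> R) :
  (forall x, P x -> 0 < f x) -> exists e, 0 < e /\ forall x, P x -> e <= f x.
Proof.
move=> hf.
suff: forall s : seq T, exists e, 0 < e /\ forall x, x \in s -> P x -> e <= f x.
  by case/(_ (enum T)) => e [e0 he]; exists e; split => // x; apply: he; rewrite mem_enum.
elim=> [|y s [e [e0 he]]]; first by exists 1.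
case: (boolP (P y)) => hy.
  exists (Num.min e (f y)); split; first by rewrite lt_min e0 hf.
  move=> x; rewrite in_cons => /orP[/eqP->|hx] hP; first by rewrite ge_min lexx orbT.
  by rewrite ge_min he.
exists e; split => // x; rewrite in_cons => /orP[/eqP->|hx] hP; first by rewrite hP in hy.
exact: he.
Qed.

Lemma down_ind (m : nat) (P : nat -> Prop) :
  P m -> (forall k, (k < m)%N -> P k.+1 -> P k) -> forall k, (k <= m)%N -> P k.
Proof.
move=> hm hs k hk; move: {2}(m - k)%N (erefl (m - k)%N) => i; elim: i k hk => [|i IH] k hk hi.
  by have -> : k = m by lia.
apply: hs; first lia.
apply: IH; lia.
Qed.

Lemma arith_t (R : realType) (t K : R) : 0 < t -> 0 <= K -> t <= 1 -> t ^+ 2 * K < t * (K + 1).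
Proof. move=> h1 h2 h3; have : 0 <= t * (1 - t) * K by rewrite !mulr_ge0 ?subr_ge0 // ltW. nra. Qed.

Lemma arith_final (R : realType) (x1 x2 x3 x4 x5 : R) :
  x1 <= x2 -> x1 = x2 + x3 - x4 + x5 -> x4 <= x3 -> 0 < x5 -> False.
Proof. move=> *; lra. Qed.
Lemma arith_gap (R : realType) (gam A A' e U U' : R) :
  0 < gam -> gam <= A' - A -> 0 <= A -> A <= 4 -> 0 <= A' -> A' <= 4 ->
  0 <= e -> e < gam ^+ 2 / 64 ->
  U <= (1 + gam / 16) * A + (1 + (gam / 16)^-1) * e ->
  (1 - gam / 16) * A' + (1 - (gam / 16)^-1) * e <= U' -> U < U'.
Proof.
move=> g0 hg hA hA4 hA' hA'4 he0 he hU hU'.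
have hinv : (gam / 16)^-1 = 16 / gam by rewrite invf_div.
rewrite hinv in hU hU'.
set mu := 16 / gam in hU hU'.
have hmu : mu * gam = 16 by rewrite /mu mulfVK // gt_eqF.
have hmu0 : 0 < mu by rewrite /mu divr_gt0.
have he' : 64 * e < gam ^+ 2 by rewrite -ltr_pdivlMl // mulrC; lra.
have h1 : mu * e * 64 < 16 * gam.
  have : mu * (64 * e) < mu * gam ^+ 2 by rewrite ltr_pM2l.
  have -> : mu * gam ^+ 2 = 16 * gam by rewrite expr2 mulrA hmu.
  lra.
have h2 : gam / 16 * (A + A') <= gam / 2.
  have : gam / 16 * (A + A') <= gam / 16 * 8 by rewrite ler_pM2l ?divr_gt0 //; lra.
  lra.
have : U' - U >= A' - A - gam / 16 * (A + A') - 2 * (mu * e) by nra.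
lra.
Qed.

Section Main.
Variables (R : realType) (n : nat) (gT : finGroupType) (G : {group gT})
  (rho : gT -> 'M[R[i]]_n) (x0 : 'cV[R[i]]_n)
  (m : nat) (Gs : nat -> {group gT}) (CL : nat -> seq gT).
Hypothesis rhoM : {in G &, {morph rho : x y / (x * y)%g >-> x *m y}}.
Hypothesis rhoU : forall g, g \in G -> unitary_mx (rho g).
Hypothesis x0n : hnorm x0 = 1.
Hypothesis forb : size (undup [seq rho g *m x0 | g <- enum G]) = #|G|.
Hypothesis G0 : (Gs 0%N : {set gT}) = 1%g.
Hypothesis Gm : (Gs m : {set gT}) = G.
Hypothesis prop : forall k, (0 < k <= m)%N -> Gs k.-1 \proper Gs k.
Hypothesis CLh : forall k, (0 < k <= m)%N -> coset_leaders (Gs k) (Gs k.-1) (CL k).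

Local Open Scope group_scope.
Implicit Types v w : 'cV[R[i]]_n.

Lemma Gs_sub i j : (i <= j <= m)%N -> Gs i \subset Gs j.
Proof.
case/andP; elim: j => [|j IH] hij hj; first by move: hij; rewrite leqn0 => /eqP->.
case: (leqP i j) => h; last by have -> : i = j.+1 by apply/eqP; rewrite eqn_leq hij.
apply: subset_trans (IH h (ltnW hj)) _.
by apply: proper_sub; apply: (prop (k := j.+1)); rewrite /= hj.
Qed.

Lemma Gs_G k : (k <= m)%N -> Gs k \subset G.
Proof. by move=> hk; rewrite -Gm; apply: Gs_sub; rewrite hk leqnn. Qed.

Lemma Gs_in k g : (k <= m)%N -> g \in Gs k -> g \in G.
Proof. by move=> hk; apply/subsetP/Gs_G. Qed.

Lemma rho1 : rho 1 = 1%:M.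
Proof.
have h := rhoU (group1 G).
have e : rho 1 = rho 1 *m rho 1 by rewrite -rhoM ?mulg1.
have : adjmx (rho 1) *m (rho 1 *m rho 1) = 1%:M by rewrite -e h.
by rewrite mulmxA h mul1mx.
Qed.

Lemma rhoMv g h v : g \in G -> h \in G -> rho (g * h) *m v = rho g *m (rho h *m v).
Proof. by move=> hg hh; rewrite rhoM // mulmxA. Qed.

Lemma rhoVK g v : g \in G -> rho g^-1 *m (rho g *m v) = v.
Proof. by move=> hg; rewrite -rhoMv ?groupV // mulVg rho1 mul1mx. Qed.

Lemma rhoKV g v : g \in G -> rho g *m (rho g^-1 *m v) = v.
Proof. by move=> hg; rewrite -rhoMv ?groupV // mulgV rho1 mul1mx. Qed.

Lemma Nm_rho g v : g \in G -> Nm (rho g *m v) = Nm v.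
Proof. by move=> hg; apply: Nm_unitary; apply: rhoU. Qed.

Lemma Nm_x0' : Nm x0 = 1%R.
Proof. exact: Nm_x0. Qed.

Lemma inj_x0 g h : g \in G -> h \in G -> rho g *m x0 = rho h *m x0 -> g = h.
Proof.
move=> hg hh E.
have hu : uniq [seq rho g *m x0 | g <- enum G].
  apply/negPn/negP => /negbTE hn.
  have := ltn_size_undup [seq rho g *m x0 | g <- enum G].
  by rewrite hn forb size_map -cardE ltnn.
by apply: (uniq_map_inj hu); rewrite ?mem_enum.
Qed.

Lemma x0_move g : g \in G -> g != 1 -> 0 < Nm (rho g *m x0 - x0).
Proof.
move=> hg hne; rewrite lt_def Nm_ge0 andbT; apply/eqP => /Nm_eq0 /eqP.
rewrite subr_eq0 => /eqP E; move/eqP: hne; apply; apply: inj_x0 => //.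
by rewrite E rho1 mul1mx.
Qed.

Lemma stab1 (H : {set gT}) g : H \subset G -> (g \in stab rho x0 H) = (g \in H) && (g == 1).
Proof.
move=> hH; rewrite inE; case: (boolP (g \in H)) => //= hg.
have hgG : g \in G by apply: (subsetP hH).
apply/eqP/eqP => [E|->]; last by rewrite rho1 mul1mx.
by apply: inj_x0 => //; rewrite E rho1 mul1mx.
Qed.


Lemma CL1 k : (0 < k <= m)%N -> 1 \in CL k.
Proof. by move=> hk; case: (CLh hk). Qed.

Lemma CL_sub k a : (0 < k <= m)%N -> a \in CL k -> a \in Gs k.
Proof. by move=> hk; case: (CLh hk) => _ _ h _ /h. Qed.

Lemma CL_ex k h : (0 < k <= m)%N -> h \in Gs k ->
  exists2 a, a \in CL k & h^-1 * a \in Gs k.-1.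
Proof.
move=> hk hh; case: (CLh hk) => _ _ _ /(_ h hh) [a [[ha1 ha2] _]].
by exists a => //; rewrite -mem_lcoset.
Qed.

Lemma CL_uniq k y a1 a2 : (0 < k <= m)%N -> y \in Gs k ->
  a1 \in CL k -> a2 \in CL k -> y^-1 * a1 \in Gs k.-1 -> y^-1 * a2 \in Gs k.-1 ->
  a1 = a2.
Proof.
move=> hk hy h1 h2 e1 e2; case: (CLh hk) => _ _ _ /(_ y hy) [a [_ hu]].
by rewrite -(hu a1) ?(hu a2) ?mem_lcoset.
Qed.

Lemma ind_CL_S k j x :
  x \in ind_CL CL k j.+1 <->
  exists d a, [/\ d \in ind_CL CL k.+1 j, a \in CL k.+1 & x = d * a].
Proof.
elim: j x => [|j IH] x.
  split.
    by case/allpairsPdep => c [d [hc]]; rewrite mem_seq1 => /eqP -> ->; exists 1, c; rewrite mem_seq1 mulg1 mul1g -addn1.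
  case=> d [a [hd ha ->]]; move: hd; rewrite mem_seq1 => /eqP ->.
  by apply/allpairsPdep; exists a, 1; rewrite mem_seq1 mulg1 mul1g addn1.
split.
  case/allpairsPdep => c [d [hc /IH [d' [a [hd' ha ->]]] ->]].
  exists (c * d'), a; split => //; last by rewrite mulgA.
  by apply/allpairsPdep; exists c, d'; split => //; rewrite /= addSnnS.
case=> d [a [hd ha ->]]; move: hd => /allpairsPdep [c [d' [hc hd' ->]]].
apply/allpairsPdep; exists c, (d' * a); split => /=; last by rewrite mulgA.
  by rewrite -addSnnS.
by apply/IH; exists d', a.
Qed.

Definition L k := ind_CL CL k (m - k).

Lemma Lm : L m = [:: 1].
Proof. by rewrite /L subnn. Qed.

Lemma L_step k x : (k < m)%N ->
  x \in L k <-> exists d a, [/\ d \in L k.+1, a \in CL k.+1 & x = d * a].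
Proof.
move=> hk; rewrite /L (_ : (m - k = (m - k.+1).+1)%N); last by rewrite subnSK.
exact: ind_CL_S.
Qed.

Lemma L_G k x : (k <= m)%N -> x \in L k -> x \in G.
Proof.
move=> hk; move: k hk x; apply: (@down_ind m (fun k => forall x, x \in L k -> x \in G)) => [x|j hj IH x] //.
  by rewrite Lm mem_seq1 => /eqP ->.
case/(L_step _ hj) => d [a [hd ha ->]]; rewrite groupM //; first exact: IH.
have hk1 : (0 < j.+1 <= m)%N by [].
exact: (Gs_in (k:=j.+1) hj (CL_sub hk1 ha)).
Qed.

Lemma L_dec k g : (k <= m)%N -> g \in G -> exists c h, [/\ c \in L k, h \in Gs k & g = c * h].
Proof.
move=> hk hg; move: k hk.
apply: (@down_ind m (fun k => exists c h, [/\ c \in L k, h \in Gs k & g = c * h])).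
  by exists 1, g; rewrite Lm mem_seq1 Gm mul1g.
move=> k hk [c' [h' [hc' hh' ->]]].
have hk1 : (0 < k.+1 <= m)%N by [].
have [a ha hu] := CL_ex hk1 hh'.
exists (c' * a), ((h'^-1 * a)^-1); split; last by rewrite invMg invgK !mulgA mulgK.
  by apply/(L_step _ hk); exists c', a.
by rewrite groupV.
Qed.

Lemma L_uniq k c1 c2 h1 h2 : (k <= m)%N -> c1 \in L k -> c2 \in L k ->
  h1 \in Gs k -> h2 \in Gs k -> c1 * h1 = c2 * h2 -> c1 = c2 /\ h1 = h2.
Proof.
move=> hk; move: k hk c1 c2 h1 h2.
apply: (@down_ind m (fun k => forall c1 c2 h1 h2, c1 \in L k -> c2 \in L k ->
  h1 \in Gs k -> h2 \in Gs k -> c1 * h1 = c2 * h2 -> c1 = c2 /\ h1 = h2)).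
  move=> c1 c2 h1 h2; rewrite Lm !mem_seq1 => /eqP -> /eqP -> _ _.
  by rewrite !mul1g.
move=> k hk IH c1 c2 h1 h2 /(L_step _ hk) [d1 [a1 [hd1 ha1 ->]]]
  /(L_step _ hk) [d2 [a2 [hd2 ha2 ->]]] hh1 hh2 E.
have hk1 : (0 < k.+1 <= m)%N by [].
have sk : Gs k \subset Gs k.+1 by apply: Gs_sub; rewrite leqnSn.
have hy1 : a1 * h1 \in Gs k.+1 by rewrite groupM ?(CL_sub hk1 ha1) // (subsetP sk _ hh1).
have hy2 : a2 * h2 \in Gs k.+1 by rewrite groupM ?(CL_sub hk1 ha2) // (subsetP sk _ hh2).
have E' : d1 * (a1 * h1) = d2 * (a2 * h2) by rewrite !mulgA.
have [-> E2] := IH d1 d2 (a1 * h1) (a2 * h2) hd1 hd2 hy1 hy2 E'.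
have ea : a1 = a2.
  apply: (CL_uniq hk1 hy1 ha1 ha2).
    by rewrite invMg mulgKV groupV.
  by rewrite E2 invMg mulgKV groupV.
by move: E2; rewrite ea => /mulgI ->.
Qed.

Definition D k r := dec_rec rho x0 CL k r.

Definition pick k r := argmin_first (fun a => hnorm (rho a *m (D k r).2 - x0)) (CL k.+1).

Lemma D_S1 k r : (D k.+1 r).1 = pick k r * (D k r).1.
Proof. by []. Qed.

Lemma D_S2 k r : (D k.+1 r).2 = rho (pick k r) *m (D k r).2.
Proof. by []. Qed.

Lemma pick_in k r : (k < m)%N -> pick k r \in CL k.+1.
Proof. by move=> hk; apply: argmin_mem; apply: CL1; rewrite /= hk. Qed.

Lemma D_in k r : (k <= m)%N -> (D k r).1 \in Gs k.
Proof.
elim: k => [|k IH] hk; first by rewrite G0 /= inE.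
rewrite D_S1 groupM //.
  by apply: CL_sub (pick_in r hk); rewrite /= hk.
by apply: (subsetP (Gs_sub (i := k) (j := k.+1) _)); rewrite ?leqnSn ?hk // IH // ltnW.
Qed.

Lemma D_2 k r : (k <= m)%N -> (D k r).2 = rho (D k r).1 *m r.
Proof.
elim: k => [|k IH] hk; first by rewrite /= rho1 mul1mx.
have hk1 : (0 < k.+1 <= m)%N by [].
rewrite D_S2 D_S1 IH ?(ltnW hk) // rhoMv //.
  exact: Gs_in hk (CL_sub hk1 (pick_in r hk)).
exact: Gs_in (ltnW hk) (D_in r (ltnW hk)).
Qed.

Lemma D_L j r : (j <= m)%N -> exists2 e, e \in L j & (D m r).1 = e * (D j r).1.
Proof.
move=> hj; move: j hj.
apply: (@down_ind m (fun j => exists2 e, e \in L j & (D m r).1 = e * (D j r).1)).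
  by exists 1; rewrite ?Lm ?mem_seq1 ?mul1g.
move=> k hk [e he ->]; exists (e * pick k r); last by rewrite D_S1 mulgA.
by apply/(L_step _ hk); exists e, (pick k r); split => //; apply: pick_in.
Qed.

Local Close Scope group_scope.

Lemma rho_shift a w : a \in G ->
  Nm (rho a *m w - x0) = Nm (w - rho a^-1%g *m x0).
Proof.
move=> ha; rewrite -{1}(rhoKV x0 ha) -mulmxBr Nm_rho //.
Qed.

Lemma sqrt_lt (x d : R) : 0 < d -> x < d ^+ 2 -> Num.sqrt x < d.
Proof.
move=> d0 hx; rewrite -(ger0_norm (ltW d0)) -sqrtr_sqr ltr_sqrt //.
by rewrite exprn_gt0.
Qed.

Lemma dirA (delta : R) : 0 < delta ->
  (forall (g : gT) (r : 'cV[R[i]]_n), g \in G ->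
      hnorm (r - rho g^-1%g *m x0) < delta ->
      subgroup_decode rho x0 CL m r \in (stab rho x0 G :* g)%g) ->
  forall j d a a', (j < m)%N -> d \in L j.+1 -> a \in CL j.+1 -> a' \in CL j.+1 -> a != a' ->
  Nm (rho a *m (rho (d * a)^-1%g *m x0) - x0) < Nm (rho a' *m (rho (d * a)^-1%g *m x0) - x0).
Proof.
move=> d0 Hdec j d a a' hj hd ha ha' hne.
have hj1 : (0 < j.+1 <= m)%N by [].
have haG : a \in G := Gs_in hj (CL_sub hj1 ha).
have ha'G : a' \in G := Gs_in hj (CL_sub hj1 ha').
have hdG : d \in G := L_G hj hd.
set g := (d * a)%g.
have hg : g \in G by rewrite groupM.
set v := rho g^-1 *m x0.
set p := rho a'^-1%g *m x0; set q := rho a^-1%g *m x0.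
rewrite !rho_shift // -/p -/q ltNge; apply/negP => Hle.
set K := Nm (p - q).
have hK : 0 < K.
  rewrite lt_def Nm_ge0 andbT; apply/eqP => /Nm_eq0 /eqP; rewrite subr_eq0 => /eqP E.
  move/eqP: hne; apply; apply/invg_inj/esym/inj_x0; rewrite ?groupV //.
set t := Num.min 1 (delta ^+ 2 / (K + 1)).
have hK1 : 0 < K + 1 by apply: addr_gt0 hK ltr01.
have ht0 : 0 < t by rewrite lt_min ltr01 divr_gt0 // exprn_gt0.
have ht1 : t <= 1 by rewrite ge_min lexx.
have ht2 : t * (K + 1) <= delta ^+ 2.
  by rewrite -ler_pdivlMr // ge_min lexx orbT.
set r := v + t%:C%C *: (p - q).
have hr : hnorm (r - rho g^-1%g *m x0) < delta.
  rewrite /r -/v (addrC v) addrK hnormE Nm_scale; apply: sqrt_lt => //.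
  rewrite -/K; apply: lt_le_trans ht2.
  by apply: arith_t => //; apply: ltW.
have := Hdec g r hg hr; rewrite mem_rcoset stab1 // => /andP[_ /eqP E1].
have Eout : (D m r).1 = g by rewrite -[(D m r).1](mulgKV g) E1 mul1g.
have hjm : (j <= m)%N := ltnW hj.
have hgL : g \in L j by apply/(L_step _ hj); exists d, a.
have [e he Ee] := D_L r hjm.
have E3 : (e * (D j r).1 = g * 1)%g by rewrite -Ee Eout mulg1.
have [_ EDj] := L_uniq hjm he hgL (D_in r hjm) (group1 _) E3.
have [e' he' Ee'] := D_L r hj.
have hpa : (pick j r * (D j r).1)%g \in Gs j.+1 by rewrite -D_S1 D_in.
have E4 : (e' * (pick j r * (D j r).1) = d * a)%g by rewrite -D_S1 -Ee'.
have [_ Epick] := L_uniq hj he' hd hpa (CL_sub hj1 ha) E4.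
rewrite EDj mulg1 in Epick.
have E2 : (D j r).2 = r by rewrite D_2 // EDj rho1 mul1mx.
have := argmin_le (fun b => hnorm (rho b *m (D j r).2 - x0)) ha'.
rewrite -/(pick j r) Epick E2 hnorm_le !rho_shift // -/p -/q.
have E5 : Nm (r - q) = Nm (r - p) + Nm (v - q) - Nm (v - p) + 2 * t * K := Nm_pert v p q t.
have h2 : 0 < 2 * t * K by rewrite !mulr_gt0.
move=> H; exact: (arith_final H E5 Hle h2).
Qed.

Definition condA := forall j d a a', (j < m)%N -> d \in L j.+1 -> a \in CL j.+1 ->
  a' \in CL j.+1 -> a != a' ->
  Nm (rho a *m (rho (d * a)^-1%g *m x0) - x0) < Nm (rho a' *m (rho (d * a)^-1%g *m x0) - x0).

Lemma rho_comp g h : g \in G -> h \in G ->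
  rho g *m (rho h *m x0) = rho (g * h)%g *m x0.
Proof. by move=> hg hh; rewrite rhoMv. Qed.

Lemma dirQ : condA -> forall k, (k <= m)%N -> forall c h, c \in L k -> h \in Gs k ->
  Nm (rho c^-1%g *m x0 - x0) <= Nm (rho h *m (rho c^-1%g *m x0) - x0) /\
  (h != 1%g -> Nm (rho c^-1%g *m x0 - x0) < Nm (rho h *m (rho c^-1%g *m x0) - x0)).
Proof.
move=> HA; elim=> [|k IH] hk c h hc hh.
  move: hh; rewrite G0 inE => /eqP ->; rewrite rho1 mul1mx eqxx; split => //.
have hk1 : (0 < k.+1 <= m)%N by [].
have hkm : (k <= m)%N := ltnW hk.
have hcG : c \in G := L_G hk hc.
have hhG : h \in G := Gs_in hk hh.
have [a ha hu] := CL_ex hk1 (groupVr hh); rewrite invgK /= in hu.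
have haG : a \in G := Gs_in hk (CL_sub hk1 ha).
have hc' : (c * a)%g \in L k by apply/(L_step _ hk); exists c, a.
have hc'G : (c * a)%g \in G by rewrite groupM.
have [IH1 IH2] := IH hkm _ _ hc' hu.
have E1 : rho (h * a)%g *m (rho (c * a)^-1%g *m x0) = rho h *m (rho c^-1%g *m x0).
  rewrite !rho_comp ?groupV ?groupM //.
  by rewrite invMg !mulgA mulgK.
rewrite E1 in IH1 IH2.
have E2 : rho a *m (rho (c * a)^-1%g *m x0) = rho c^-1%g *m x0.
  by rewrite !rho_comp ?groupV ?groupM // invMg mulgA mulgV mul1g.
have key : a != 1%g -> Nm (rho c^-1%g *m x0 - x0) < Nm (rho (c * a)^-1%g *m x0 - x0).
  move=> hne; have := HA k c a 1%g hk hc ha (CL1 hk1) hne.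
  by rewrite E2 rho1 mul1mx.
case: (eqVneq a 1%g) => [ea|hne].
  rewrite ea mulg1 in IH1 IH2; split => // hh1; apply: IH2.
  by rewrite mulg1.
have k2 := key hne.
split; first exact: le_trans (ltW k2) IH1.
by move=> _; exact: lt_le_trans k2 IH1.
Qed.

Definition condB := forall k, (k < m)%N -> forall c, c \in L k -> minimal_rep rho x0 (Gs k) c.

Lemma Nm0 : Nm (0 : 'cV[R[i]]_n) = 0.
Proof. by rewrite /Nm big1 // => i _; rewrite mxE /= expr0n addr0. Qed.

Lemma gapB : condB -> forall j d h, (j < m)%N -> d \in L j.+1 -> h \in Gs j.+1 -> h != 1%g ->
  Nm (rho d^-1%g *m x0 - x0) < Nm (rho h *m (rho d^-1%g *m x0) - x0).
Proof.
move=> HB j d h hj hd hh hne.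
have hhG : h \in G := Gs_in hj hh.
case: (ltnP j.+1 m) => hjm.
  have [y [hFR hy]] := HB _ hjm _ hd.
  have hdG : d \in G := L_G (ltnW hjm) hd.
  have -> : rho d^-1%g *m x0 = y by rewrite hy rhoVK.
  rewrite -hnorm_lt; apply: hFR.
  rewrite inE stab1; last exact: Gs_G.
  by rewrite hh (negbTE hne).
have ejm : j.+1 = m by apply/eqP; rewrite eqn_leq hj hjm.
move: hd; rewrite ejm Lm mem_seq1 => /eqP ->.
by rewrite invg1 rho1 mul1mx subrr Nm0 x0_move.
Qed.
Local Close Scope group_scope.


Lemma decodeB : condB -> decodes_correctly_with_noise rho x0 CL G m.
Proof.
move=> HB.
pose P := fun x : ('I_m * gT * gT)%type =>
  [&& x.1.2 \in L (x.1.1).+1, x.2 \in Gs (x.1.1).+1 & x.2 != 1%g].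
pose f := fun x : ('I_m * gT * gT)%type =>
  Nm (rho x.2 *m (rho x.1.2^-1%g *m x0) - x0) - Nm (rho x.1.2^-1%g *m x0 - x0).
have [gam [g0 hgam]] : exists e, 0 < e /\ forall x, P x -> e <= f x.
  apply: fin_gap => -[[j d] h] /and3P[hd hh hne]; rewrite subr_gt0.
  exact: gapB (ltn_ord j) hd hh hne.
pose eta := gam ^+ 2 / 64.
have eta0 : 0 < eta by rewrite divr_gt0 ?exprn_gt0.
exists (Num.sqrt eta); split; first by rewrite sqrtr_gt0.
move=> g r hg hr.
have heps : Nm (r - rho g^-1%g *m x0) < eta.
  by move: hr; rewrite hnormE ltr_sqrt.
set eps := Nm (r - rho g^-1%g *m x0) in heps.
have eps0 : 0 <= eps := Nm_ge0 _.
have inv : forall j, (j <= m)%N -> exists2 c, c \in L j & g = (c * (D j r).1)%g.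
  elim=> [|j IH] hj.
    have [c [h [hc hh ->]]] := L_dec (leq0n m) hg.
    by move: hh; rewrite G0 inE => /eqP ->; exists c.
  have hjm : (j <= m)%N := ltnW hj.
  have hj1 : (0 < j.+1 <= m)%N by [].
  have [c hc Eg] := IH hjm.
  have [d [a [hd ha Ec]]] := (L_step _ hj).1 hc.
  set gj := (D j r).1 in Eg.
  have hgjG : gj \in G := Gs_in hjm (D_in r hjm).
  have hdG : d \in G := L_G hj hd.
  have haG : a \in G := Gs_in hj (CL_sub hj1 ha).
  set v := rho d^-1%g *m x0.
  set e := rho gj *m (r - rho g^-1%g *m x0).
  have Ee : Nm e = eps by rewrite Nm_rho.
  have Er : (D j r).2 = rho a^-1%g *m v + e.
    have EX : rho gj *m (rho g^-1%g *m x0) = rho a^-1%g *m v.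
      rewrite /v !rho_comp ?groupV //; congr (rho _ *m _).
      by rewrite Eg Ec invMg mulgA mulgV mul1g invMg.
    by rewrite D_2 // /e mulmxBr EX addrC subrK.
  have Eb : forall b, b \in G -> rho b *m (D j r).2 - x0 =
      (rho (b * a^-1)%g *m v - x0) + rho b *m e.
    move=> b hb; rewrite Er mulmxDr rhoMv ?groupV //.
    by rewrite addrAC.
  have le4 : forall b, b \in G -> Nm (rho (b * a^-1)%g *m v - x0) <= 4.
    move=> b hb; apply: le_trans (Nm_sub_le _ _) _.
    rewrite /v rho_comp ?groupM ?groupV // Nm_rho ?groupM ?groupV // Nm_x0'.
    lra.
  have hpick : pick j r = a.
    apply: argmin_strict => //; first exact: CL1.
    move=> b hb hba; rewrite hnorm_lt.
    have hbG : b \in G := Gs_in hj (CL_sub hj1 hb).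
    rewrite !Eb //.
    have hP : P (Ordinal hj, d, (b * a^-1)%g).
      apply/and3P; split => //=.
        by rewrite groupM ?groupV ?(CL_sub hj1).
      by apply: contra hba => /eqP E; apply/eqP; rewrite -(mulgKV a b) E mul1g.
    have hf := hgam _ hP; rewrite /f /= -/v in hf.
    have Ea : rho (a * a^-1)%g *m v = v by rewrite mulgV rho1 mul1mx.
    rewrite Ea.
    have le4a : Nm (v - x0) <= 4 by rewrite -{1}Ea; exact: le4 a haG.
    have l0 : 0 < gam / 16 by rewrite divr_gt0.
    apply: (arith_gap g0 _ (Nm_ge0 _) le4a (Nm_ge0 _) (le4 b hbG) eps0 heps).
    - exact: hf.
    - by have := NmD_le (v - x0) (rho a *m e) l0; rewrite Nm_rho // Ee.
    - by have := NmD_ge (rho (b * a^-1)%g *m v - x0) (rho b *m e) l0; rewrite Nm_rho // Ee.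
  exists d => //; rewrite D_S1 hpick -/gj Eg Ec mulgA //.
have [c hc Eg] := inv m (leqnn m).
move: hc; rewrite Lm mem_seq1 => /eqP Ec; rewrite Ec mul1g in Eg.
rewrite /subgroup_decode -/(D m r) -Eg mem_rcoset mulgV stab1 //.
by rewrite group1 eqxx.
Qed.

Lemma mainthm : decodes_correctly_with_noise rho x0 CL G m <->
  (forall k, (k < m)%N -> forall c, c \in ind_CL CL k (m - k) ->
     minimal_rep rho x0 (Gs k) c).
Proof.
split; last first.
  by move=> H; apply: decodeB => k hk c hc; apply: H.
case=> delta [d0 Hdec].
have HA : condA by move=> j d a a' hj hd ha ha' hne; apply: (dirA d0 Hdec hj hd ha ha' hne).
move=> k hk c hc.
have hkm : (k <= m)%N := ltnW hk.
have hcG : c \in G := L_G hkm hc.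
exists (rho c^-1%g *m x0); split; last by rewrite rhoKV.
move=> h; rewrite inE stab1; last exact: Gs_G.
case/andP=> hn hh; rewrite hh /= in hn.
rewrite hnorm_lt; exact: (dirQ HA hkm hc hh).2 hn.
Qed.

End Main.

Theorem theoremA (R : realType) (n : nat) (gT : finGroupType) (G : {group gT})
    (rho : gT -> 'M[R[i]]_n) (x0 : 'cV[R[i]]_n)
    (m : nat) (Gs : nat -> {group gT}) (CL : nat -> seq gT) :
  {in G &, {morph rho : x y / (x * y)%g >-> x *m y}} ->
  {in G &, injective rho} ->
  (forall g, g \in G -> unitary_mx (rho g)) ->
  hnorm x0 = 1 ->
  size (undup [seq rho g *m x0 | g <- enum G]) = #|G| ->
  (Gs 0%N : {set gT}) = 1%g ->
  (Gs m : {set gT}) = G ->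
  (forall k, (0 < k <= m)%N -> Gs k.-1 \proper Gs k) ->
  (forall k, (0 < k <= m)%N -> coset_leaders (Gs k) (Gs k.-1) (CL k)) ->
  (decodes_correctly_with_noise rho x0 CL G m <->
   forall k, (k < m)%N -> forall c, c \in ind_CL CL k (m - k) ->
     minimal_rep rho x0 (Gs k) c).
Proof.
move=> h1 h2 h3 h4 h5 h6 h7 h8 h9.
by apply: mainthm.
Qed.
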